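(* For $0<q<1$, \[ \sum_{k=0}^\infty\frac{q^k}{(1-q^{k+\frac12})^2}=\sum_{n=0}^\infty\frac{(1-2q^{2n+\frac32}+q^{n+1})\,q^{n^2+n}}{(1-q^{2n+1})(1+q^{n+1})}\cdot\frac{(q;q)_n^4}{(q^{\frac12};q)_{n+1}^2\,(q;q)_{2n}}. \]
   Context: $(x;q)_n=\prod_{i=0}^{n-1}(1-xq^i)$ is the $q$-shifted factorial. *)

(* Defs.v *)
From Stdlib Require Import Reals.
From Coquelicot Require Import Coquelicot.
Open Scope R_scope.

Fixpoint qpoch (x q : R) (n : nat) : R :=
  match n with
  | O => 1
  | S m => qpoch x q m * (1 - x * q ^ m)
  end.

(* left-hand summand q^k / (1 - q^(k+1/2))^2, with q^(1/2) = sqrt q *)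
Definition lhs_term (q : R) (k : nat) : R :=
  q ^ k / (1 - q ^ k * sqrt q) ^ 2.

Definition rhs_term (q : R) (n : nat) : R :=
  (1 - 2 * (q ^ (2 * n + 1) * sqrt q) + q ^ (n + 1)) * q ^ (n * n + n)
  / ((1 - q ^ (2 * n + 1)) * (1 + q ^ (n + 1)))
  * (qpoch q q n ^ 4
     / (qpoch (sqrt q) q (n + 1) ^ 2 * qpoch q q (2 * n))).

(* Main.v *)
Require Import Defs.
From Stdlib Require Import Reals Lra Lia Field.
From Coquelicot Require Import Coquelicot.
Open Scope R_scope.

Lemma alg (q x Q Z E W P1 P2 P3 : R) : q = x*x ->
  P1 <> 0 -> P2 <> 0 -> P3 <> 0 -> 1 - q*Q^2 <> 0 -> 1 - q*q*Q^2 <> 0 ->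
  1 - x*Z*(q*Q) <> 0 -> 1 - x*Z <> 0 ->
  E * P1^4 / P2 * W / P3^2
  - E*(q*q*Q^2) * (P1*(1-q*Q))^4 / (P2*(1-q*Q^2)*(1-q*q*Q^2)) * (W*Z^2) / (P3*(1-x*Z*(q*Q)))^2
  = E * P1^4 / P2 * W / P3^2 * (1/(1-q*Q^2) + -2*(q*Q^2)*x*(1-q*Q)/((1-q*Q^2)*(1-q*q*Q^2))*Z)
    - E*P1^4/P2 * (W*(q*Q^2)) / (P3*(1-x*Z*(q*Q))/(1-x*Z))^2
      * (1/(1-q*Q^2) + -2*(q*Q^2)*x*(1-q*Q)/((1-q*Q^2)*(1-q*q*Q^2))*(Z*q)).
Proof.
  intros Hq. intros. subst q. field. repeat split; auto.
Qed.

Lemma qpoch_Sl a q m : qpoch a q (S m) = (1-a) * qpoch (a*q) q m.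
Proof.
  induction m as [|m IH].
  - simpl. ring.
  - change (qpoch a q (S (S m))) with (qpoch a q (S m) * (1 - a * q^(S m))).
    rewrite IH. simpl. ring.
Qed.

Lemma pow_le1 q m : 0 <= q <= 1 -> 0 <= q^m <= 1.
Proof.
  intros H. induction m as [|m IH]; simpl. lra.
  split. apply Rmult_le_pos; lra.
  rewrite <- (Rmult_1_l 1). apply Rmult_le_compat; lra.
Qed.

Lemma qpoch_bounds a q m : 0 <= a < 1 -> 0 <= q <= 1 ->
  (1-a)^m <= qpoch a q m /\ qpoch a q m <= 1.
Proof.
  intros Ha Hq. induction m as [|m IH]; simpl. lra.
  destruct (pow_le1 q m Hq) as [H1 H2].
  assert (0 <= a * q^m <= a).
  { split. apply Rmult_le_pos; lra. rewrite <- (Rmult_1_r a) at 2.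
    apply Rmult_le_compat_l; lra. }
  assert (0 <= (1-a)^m) by (apply pow_le; lra).
  split.
  - rewrite Rmult_comm. apply Rmult_le_compat; lra.
  - rewrite <- (Rmult_1_l 1). apply Rmult_le_compat; lra.
Qed.

Lemma qpoch_pos a q m : 0 <= a < 1 -> 0 <= q <= 1 -> 0 < qpoch a q m.
Proof.
  intros Ha Hq. destruct (qpoch_bounds a q m Ha Hq) as [H _].
  eapply Rlt_le_trans; [|exact H]. apply pow_lt; lra.
Qed.

Definition T (q : R) (n k : nat) : R :=
  q^(n*n+n) * qpoch q q n ^4 / qpoch q q (2*n) * q^((2*n+1)*k)
  / qpoch (sqrt q * q^k) q (n+1) ^2.
Definition G (q : R) (n k : nat) : R :=
  T q n k * (1/(1 - q^(2*n+1)) +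
     -2*q^(2*n+1)*sqrt q*(1-q^(n+1))/((1-q^(2*n+1))*(1-q^(2*n+2))) * q^k).

Section S.
Variable q : R.
Hypothesis hq0 : 0 < q.
Hypothesis hq1 : q < 1.

Lemma sq_facts : 0 < sqrt q < 1 /\ sqrt q * sqrt q = q.
Proof.
  split; [split|]. apply sqrt_lt_R0; lra.
  rewrite <- sqrt_1. apply sqrt_lt_1; lra.
  apply sqrt_sqrt; lra.
Qed.

Lemma pw_a n : q^(2*n+1) = q*(q^n)^2.
Proof. replace (2*n)%nat with (n*2)%nat by lia. rewrite pow_add, pow_mult. simpl. ring. Qed.
Lemma pw_b n : q^(n+1) = q*q^n.
Proof. rewrite pow_add. simpl. ring. Qed.
Lemma pw_c n : q^(2*n+2) = q*q*(q^n)^2.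
Proof. replace (2*n)%nat with (n*2)%nat by lia. rewrite pow_add, pow_mult. simpl. ring. Qed.

Lemma T_rec n k : T q n k - T q (S n) k = G q n k - G q n (S k).
Proof.
  destruct sq_facts as [[Hx0 Hx1] Hxx].
  unfold G, T.
  assert (F1 : q^(S n * S n + S n) = q^(n*n+n) * (q*q*(q^n)^2)).
  { rewrite <- pw_c, <- pow_add. f_equal. lia. }
  assert (F2 : qpoch q q (S n) = qpoch q q n * (1 - q*q^n)) by reflexivity.
  assert (F3 : qpoch q q (2*S n) = qpoch q q (2*n) * (1 - q*(q^n)^2) * (1 - q*q*(q^n)^2)).
  { replace (2 * S n)%nat with (S (S (2*n))) by lia.
    change (qpoch q q (S (S (2*n)))) with (qpoch q q (2*n) * (1 - q*q^(2*n)) * (1 - q*(q*q^(2*n)))).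
    replace (q^(2*n)) with ((q^n)^2) by (rewrite <- pow_mult; f_equal; lia). ring. }
  assert (F4 : q^((2*S n+1)*k) = q^((2*n+1)*k) * (q^k)^2).
  { rewrite <- pow_mult, <- pow_add. f_equal. lia. }
  assert (F5 : qpoch (sqrt q*q^k) q (S n + 1) = qpoch (sqrt q * q^k) q (n+1) * (1 - sqrt q * q^k * (q*q^n))).
  { replace (S n + 1)%nat with (S (n+1)) by lia. simpl qpoch at 1. rewrite pw_b. reflexivity. }
  assert (F6 : q^((2*n+1)*S k) = q^((2*n+1)*k) * (q*(q^n)^2)).
  { rewrite <- pw_a, <- pow_add. f_equal. lia. }
  assert (HP3 : 0 < qpoch (sqrt q * q^k) q (n+1)).
  { apply qpoch_pos; [|lra]. destruct (pow_le1 q k) as [? ?]; [lra|].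
    split. apply Rmult_le_pos; lra.
    apply Rle_lt_trans with (sqrt q * 1). apply Rmult_le_compat_l; lra. lra. }
  assert (Hxz : 0 < 1 - sqrt q * q^k).
  { destruct (pow_le1 q k) as [? ?]; [lra|].
    assert (sqrt q * q^k <= sqrt q * 1) by (apply Rmult_le_compat_l; lra). lra. }
  assert (Hxzq : 0 < 1 - sqrt q * q^k * (q*q^n)).
  { destruct (pow_le1 q k) as [? ?]; [lra|]. destruct (pow_le1 q n) as [? ?]; [lra|].
    assert (q * q^n <= 1) by (rewrite <- (Rmult_1_l 1); apply Rmult_le_compat; lra).
    assert (sqrt q * q^k * (q*q^n) <= sqrt q * 1 * 1).
    { apply Rmult_le_compat; try lra. apply Rmult_le_pos; lra. apply Rmult_le_pos; lra.
      apply Rmult_le_compat_l; lra. }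
    lra. }
  assert (F7 : qpoch (sqrt q * q^(S k)) q (n+1) = qpoch (sqrt q*q^k) q (n+1) * (1 - sqrt q*q^k*(q*q^n)) / (1 - sqrt q * q^k)).
  { assert (E := qpoch_Sl (sqrt q * q^k) q (n+1)).
    replace (sqrt q * q^(S k)) with (sqrt q * q^k * q) by (simpl; ring).
    change (qpoch (sqrt q * q ^ k) q (S (n + 1))) with
      (qpoch (sqrt q * q ^ k) q (n + 1) * (1 - sqrt q * q^k * q^(n+1))) in E.
    rewrite pw_b in E. rewrite E. field. lra. }
  assert (F8 : q^(S k) = q^k * q) by (simpl; ring).
  rewrite F1, F2, F3, F4, F5, F6, F7, F8, !pw_a, !pw_b, !pw_c.
  assert (HQ : 0 <= q^n <= 1) by (apply pow_le1; lra).
  apply alg.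
  - lra.
  - apply Rgt_not_eq, qpoch_pos; lra.
  - apply Rgt_not_eq, qpoch_pos; lra.
  - lra.
  - assert (0 <= (q^n)^2 <= 1) by (simpl; nra). apply Rgt_not_eq; nra.
  - assert (0 <= (q^n)^2 <= 1) by (simpl; nra). apply Rgt_not_eq; nra.
  - lra.
  - lra.
Qed.

Lemma T0 k : T q 0 k = lhs_term q k.
Proof.
  destruct sq_facts as [[Hx0 Hx1] Hxx].
  unfold T, lhs_term. replace ((2*0+1)*k)%nat with k by lia. simpl.
  destruct (pow_le1 q k) as [? ?]; [lra|].
  assert (sqrt q * q^k <= sqrt q * 1) by (apply Rmult_le_compat_l; lra).
  field. nra.
Qed.

Lemma G0 n : G q n 0 = rhs_term q n.
Proof.
  destruct sq_facts as [[Hx0 Hx1] Hxx].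
  unfold G, T, rhs_term. rewrite Nat.mul_0_r. simpl pow at 2 3. rewrite !Rmult_1_r.
  rewrite !pw_a, !pw_b, !pw_c.
  assert (HQ : 0 <= q^n <= 1) by (apply pow_le1; lra).
  assert (0 <= (q^n)^2 <= 1) by (simpl; nra).
  assert (0 < qpoch q q n) by (apply qpoch_pos; lra).
  assert (0 < qpoch q q (2*n)) by (apply qpoch_pos; lra).
  assert (0 < qpoch (sqrt q) q (n+1)) by (apply qpoch_pos; lra).
  field. repeat split; try (apply Rgt_not_eq; nra); try lra.
Qed.

Definition e (N : nat) : R :=
  q^(N*N+N) / (1-q)^(2*N) / ((1 - sqrt q)^(N+1))^2.

Lemma e_pos N : 0 < e N.
Proof.
  destruct sq_facts as [[Hx0 Hx1] Hxx]. unfold e.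
  apply Rdiv_lt_0_compat; [apply Rdiv_lt_0_compat|]; apply pow_lt; try lra.
  apply pow_lt; lra.
Qed.

Lemma T_bound N k : 0 <= T q N k <= e N * q^k.
Proof.
  destruct sq_facts as [[Hx0 Hx1] Hxx].
  unfold T, e, Rdiv.
  destruct (qpoch_bounds q q N) as [_ HP1]; try lra.
  assert (HP1' : 0 < qpoch q q N) by (apply qpoch_pos; lra).
  destruct (qpoch_bounds q q (2*N)) as [HP2 _]; try lra.
  destruct (pow_le1 q k) as [Hk0 Hk1]; [lra|].
  assert (Hxk : 0 <= sqrt q * q^k < 1).
  { split. apply Rmult_le_pos; lra.
    apply Rle_lt_trans with (sqrt q * 1). apply Rmult_le_compat_l; lra. lra. }
  destruct (qpoch_bounds (sqrt q * q^k) q (N+1)) as [HP3 _]; try lra.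
  assert (H3 : (1 - sqrt q)^(N+1) <= qpoch (sqrt q * q^k) q (N+1)).
  { eapply Rle_trans; [|exact HP3]. apply pow_incr. split; [lra|].
    assert (sqrt q * q^k <= sqrt q * 1) by (apply Rmult_le_compat_l; lra). lra. }
  assert (H3p : 0 < (1 - sqrt q)^(N+1)) by (apply pow_lt; lra).
  assert (H2p : 0 < (1 - q)^(2*N)) by (apply pow_lt; lra).
  assert (Hb : 0 <= qpoch q q N ^ 4 <= 1) by (apply pow_le1; lra).
  assert (Hc : 0 < / qpoch q q (2*N) <= / (1-q)^(2*N)).
  { split. apply Rinv_0_lt_compat; lra. apply Rinv_le_contravar; lra. }
  assert (Hd : 0 <= q^((2*N+1)*k) <= q^k).
  { split. apply pow_le; lra. rewrite Nat.mul_add_distr_r, Nat.mul_1_l, pow_add.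
    destruct (pow_le1 q (2*N*k)) as [? ?]; [lra|].
    rewrite <- (Rmult_1_l (q^k)) at 2. apply Rmult_le_compat; lra. }
  assert (He : 0 < / qpoch (sqrt q * q^k) q (N+1) ^ 2 <= / ((1 - sqrt q)^(N+1))^2).
  { split. apply Rinv_0_lt_compat, pow_lt; lra.
    apply Rinv_le_contravar. apply pow_lt; lra. apply pow_incr; lra. }
  assert (Ha : 0 < q^(N*N+N)) by (apply pow_lt; lra).
  split.
  - repeat apply Rmult_le_pos; lra.
  - replace (q ^ (N * N + N) * / (1 - q) ^ (2 * N) * / ((1 - sqrt q) ^ (N + 1)) ^ 2 * q ^ k)
      with (q ^ (N * N + N) * 1 * / (1 - q) ^ (2 * N) * q^k * / ((1 - sqrt q) ^ (N + 1)) ^ 2) by ring.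
    repeat apply Rmult_le_compat; try lra; repeat apply Rmult_le_pos; lra.
Qed.

Lemma ex_T N : ex_series (T q N).
Proof.
  apply (@ex_series_le R_AbsRing R_CompleteNormedModule) with (b := fun k => e N * q^k).
  - intros k. destruct (T_bound N k). unfold norm; simpl. unfold abs; simpl.
    rewrite Rabs_pos_eq; lra.
  - apply (ex_series_scal_l (V := R_NormedModule) (e N) (fun k => q^k)).
    apply ex_series_geom. rewrite Rabs_pos_eq; lra.
Qed.

Lemma e_lim : is_lim_seq e 0.
Proof.
  destruct sq_facts as [[Hx0 Hx1] Hxx].
  set (c := /((1-q)^2 * (1-sqrt q)^2)).
  assert (Hr : forall N, Rabs (e (S N) / e N) = q*q*(q^N)^2 * c).
  { intros N. assert (H := e_pos N). rewrite Rabs_pos_eq.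
    2:{ apply Rlt_le, Rdiv_lt_0_compat; auto. apply e_pos. }
    unfold e, c.
    replace (S N * S N + S N)%nat with ((N*N+N) + (2*N+2))%nat by lia.
    replace (2 * S N)%nat with (2*N + 2)%nat by lia.
    replace (S N + 1)%nat with ((N+1) + 1)%nat by lia.
    rewrite !pow_add. replace (q^(2*N)) with ((q^N)^2) by (rewrite <- pow_mult; f_equal; lia).
    assert (0 < (1-q)^(2*N)) by (apply pow_lt; lra).
    assert (0 < (1-sqrt q)^(N+1)) by (apply pow_lt; lra).
    assert (0 < q^(N*N+N)) by (apply pow_lt; lra).
    field. repeat split; apply Rgt_not_eq; try (apply pow_lt; lra); nra. }
  assert (Hl : is_lim_seq (fun N => Rabs (e (S N) / e N)) 0).
  { eapply is_lim_seq_ext. intros N. symmetry. apply Hr.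
    replace (Finite 0) with (Finite (q*q*(0*0)*c)) by (f_equal; ring).
    apply is_lim_seq_mult'; [|apply is_lim_seq_const].
    apply is_lim_seq_mult'; [apply is_lim_seq_const|].
    apply is_lim_seq_ext with (u := fun N => q^N * q^N). { intros N. simpl. ring. }
    assert (Hg : is_lim_seq (fun N => q^N) 0) by (apply is_lim_seq_geom; rewrite Rabs_pos_eq; lra).
    apply is_lim_seq_mult'; exact Hg. }
  assert (Hex := ex_series_DAlembert e 0 ltac:(lra) (fun N => Rgt_not_eq _ _ (e_pos N)) Hl).
  apply ex_series_lim_0 in Hex.
  eapply is_lim_seq_ext; [|exact Hex]. intros N. simpl. apply Rabs_pos_eq, Rlt_le, e_pos.
Qed.

Lemma S_lim : is_lim_seq (fun N => Series (T q N)) 0.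
Proof.
  assert (Hg : Rabs q < 1) by (rewrite Rabs_pos_eq; lra).
  apply is_lim_seq_le_le with (u := fun _ => 0) (w := fun N => e N * / (1 - q)).
  - intros N. split.
    + assert (Hz : Series (fun k => 0 * T q N k) = 0) by (rewrite Series_scal_l; ring).
      rewrite <- Hz. apply Series_le. intros k. destruct (T_bound N k); lra. apply ex_T.
    + rewrite <- (is_series_unique _ _ (is_series_geom q Hg)).
      rewrite <- Series_scal_l.
      apply Series_le. intros k. apply T_bound.
      apply (ex_series_scal_l (V := R_NormedModule) (e N) (fun k => q^k)).
      apply ex_series_geom; auto.
  - apply is_lim_seq_const.
  - replace (Finite 0) with (Finite (0 * / (1-q))) by (f_equal; ring).
    apply is_lim_seq_mult'. apply e_lim. apply is_lim_seq_const.
Qed.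

Lemma G_lim n : is_lim_seq (fun K => G q n K) 0.
Proof.
  unfold G.
  set (A := 1 / (1 - q ^ (2 * n + 1))).
  set (B := -2 * q ^ (2 * n + 1) * sqrt q * (1 - q ^ (n + 1)) / ((1 - q ^ (2 * n + 1)) * (1 - q ^ (2 * n + 2)))).
  replace (Finite 0) with (Finite (0 * (A + B * 0))) by (f_equal; ring).
  apply is_lim_seq_mult'. apply ex_series_lim_0, ex_T.
  apply is_lim_seq_plus'. apply is_lim_seq_const.
  apply is_lim_seq_mult'. apply is_lim_seq_const.
  apply is_lim_seq_geom. rewrite Rabs_pos_eq; lra.
Qed.

Lemma tel n K : sum_f_R0 (T q n) K - sum_f_R0 (T q (S n)) K = G q n 0 - G q n (S K).
Proof.
  induction K as [|K IH]; simpl.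
  - apply T_rec; auto.
  - assert (E := T_rec n (S K)). lra.
Qed.

Lemma fin N K : sum_f_R0 (T q 0) K - sum_f_R0 (T q (S N)) K
  = sum_f_R0 (fun n => G q n 0 - G q n (S K)) N.
Proof.
  induction N as [|N IH]; simpl.
  - apply tel.
  - rewrite <- IH, <- (tel (S N) K). ring.
Qed.

Lemma lim_sum (f : nat -> nat -> R) (l : nat -> R) N :
  (forall n, is_lim_seq (fun K => f n K) (l n)) ->
  is_lim_seq (fun K => sum_f_R0 (fun n => f n K) N) (sum_f_R0 l N).
Proof.
  intros H. induction N as [|N IH]; simpl.
  - apply H.
  - apply is_lim_seq_plus'; auto.
Qed.

Lemma partial N : sum_f_R0 (fun n => G q n 0) N = Series (T q 0) - Series (T q (S N)).
Proof.
  assert (H1 : is_lim_seq (fun K => sum_f_R0 (fun n => G q n 0 - G q n (S K)) N)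
                 (sum_f_R0 (fun n => G q n 0) N)).
  { replace (sum_f_R0 (fun n => G q n 0) N) with (sum_f_R0 (fun n => G q n 0 - 0) N).
    2:{ apply sum_eq. intros. ring. }
    apply lim_sum. intros n. apply is_lim_seq_minus'. apply is_lim_seq_const.
    apply (is_lim_seq_incr_1 (fun K => G q n K)). apply G_lim. }
  assert (H2 : is_lim_seq (fun K => sum_f_R0 (fun n => G q n 0 - G q n (S K)) N)
                 (Series (T q 0) - Series (T q (S N)))).
  { eapply is_lim_seq_ext. intros K. apply fin.
    apply is_lim_seq_minus'.
    - eapply is_lim_seq_ext. intros K. apply sum_n_Reals. apply Series_correct, ex_T.
    - eapply is_lim_seq_ext. intros K. apply sum_n_Reals. apply Series_correct, ex_T. }
  apply is_lim_seq_unique in H1. apply is_lim_seq_unique in H2.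
  rewrite H1 in H2. injection H2. auto.
Qed.

End S.

Theorem mainTheorem20 (q : R) (hq0 : 0 < q) (hq1 : q < 1) :
  exists l : R, is_series (lhs_term q) l /\ is_series (rhs_term q) l.
Proof.
  exists (Series (T q 0)). split.
  - eapply is_series_ext. intros k. apply T0; auto. apply Series_correct, ex_T; auto.
  - unfold is_series. change (is_lim_seq (sum_n (rhs_term q)) (Series (T q 0))).
    replace (Finite (Series (T q 0))) with (Finite (Series (T q 0) - 0)) by (f_equal; ring).
    apply is_lim_seq_ext with (u := fun N => Series (T q 0) - Series (T q (S N))).
    intros N. rewrite sum_n_Reals. rewrite <- (partial q hq0 hq1 N).
    apply sum_eq. intros. apply G0; auto.
    apply is_lim_seq_minus'. apply is_lim_seq_const.
    apply (is_lim_seq_incr_1 (fun N => Series (T q N))). apply S_lim; auto.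
Qed.
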